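(* Let $J$ be an instance of broadcast scheduling with maximum flow time, let $L^*$ be its optimal maximum flow time, and let $0<\epsilon\le1$ be such that $\epsilon L^*$ is a positive integer. Let $J'$ be the modified instance defined below. Then there exists a schedule $\sigma'$ for $J'$ with maximum flow time at most $(1+2\epsilon)L^*$. Further, any schedule $\sigma'$ for $J'$ can be converted into a feasible schedule $\sigma$ for the original instance $J$ such that $F^\sigma_\rho-F^{\sigma'}_\rho\le 2\epsilon L^*$ for every request $\rho$.
   Context: Broadcast scheduling with maximum flow time: pages $\mathcal{P}$ (unit-sized), requests $\rho$ with integer release time $r_\rho\ge0$ and requested page $p_\rho$. In the original instance $J$ a feasible schedule transmits at most one page at each positive integer time. In a schedule $\sigma$, the completion time $C^\sigma_\rho$ is the first time strictly greater than $r_\rho$ at which $p_\rho$ is transmitted, and the flow time is $F^\sigma_\rho=C^\sigma_\rho-r_\rho$. The modified instance $J'$: each request $\rho$ of $J$ is kept with the same page but its release time is shifted to $\epsilon L^*\lceil r_\rho/(\epsilon L^* )\rceil$; in $J'$ a schedule may transmit pages only at times that are integral multiples of $\epsilon L^*$, and at most $\epsilon L^*$ pages at each such time. Completion and flow times in $J'$ are defined as in $J$ (with respect to the shifted release times); the flow time of $\rho$ in $J$ under $\sigma$ uses the original release time. *)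

(* Defs.v *)
From HB Require Import structures.
From mathcomp Require Import all_boot all_order all_algebra.
Set Implicit Arguments. Unset Strict Implicit. Unset Printing Implicit Defensive.

(* An instance J: a finite type of pages P, a finite type of requests I,
   with requested page [pg i] and integer release time [rel i >= 0]. *)

(* A schedule for J: at each time t the page transmitted (if any).
   Transmissions are only allowed at positive integer times. *)
Definition schedJ (P : finType) := nat -> option P.
Definition feasibleJ (P : finType) (s : schedJ P) : Prop := s 0 = None.

Definition completesJ (P : finType) (s : schedJ P) (p : P) (r C : nat) : Prop :=
  [/\ r < C, s C = Some p & forall t, r < t -> t < C -> s t <> Some p].

Definition maxflowJ_le (P I : finType) (pg : I -> P) (rel : I -> nat)
  (s : schedJ P) (L : nat) : Prop :=
  forall i : I, exists C, completesJ s (pg i) (rel i) C /\ C - rel i <= L.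

Definition opt_maxflow (P I : finType) (pg : I -> P) (rel : I -> nat) (L : nat) : Prop :=
  (exists s, feasibleJ s /\ maxflowJ_le pg rel s L) /\
  (forall s L', feasibleJ s -> maxflowJ_le pg rel s L' -> L <= L').

(* The modified instance J' (with k = eps * Lopt): release times shifted to
   k * ceil(r / k); transmissions only at integral multiples of k, at most
   k pages at each such time. *)
Definition shift_rel (k r : nat) : nat := k * (divn (r + (k - 1)) k).

Definition schedJ' (P : finType) := nat -> {set P}.
Definition feasibleJ' (P : finType) (k : nat) (s : schedJ' P) : Prop :=
  forall t, #|s t| <= k /\ (s t != set0 -> k %| t).

Definition completesJ' (P : finType) (s : schedJ' P) (p : P) (r C : nat) : Prop :=
  [/\ r < C, p \in s C & forall t, r < t -> t < C -> p \notin s t].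

(* Main.v *)
Require Import Defs.
From HB Require Import structures.
From mathcomp Require Import all_boot all_order all_algebra.
From mathcomp Require Import zify ring lra.
Import Order.TTheory GRing.Theory Num.Theory.

Lemma first_after (q : pred nat) (r t : nat) : (r < t)%N -> q t ->
  exists C, [/\ (r < C)%N, q C, (C <= t)%N &
    forall u, (r < u)%N -> (u < C)%N -> ~~ q u].
Proof.
move=> rt qt.
have ex : exists n, (r < n)%N && q n by exists t; rewrite rt qt.
case: (ex_minnP ex) => C /andP[rC qC] minC.
exists C; split => //; first by apply: minC; rewrite rt qt.
move=> u ru uC; apply/negP => qu.
have := minC u; rewrite ru qu => /(_ isT); lia.
Qed.

Lemma shift_ge k r : (0 < k)%N -> (r <= shift_rel k r)%N.
Proof.
move=> k0; rewrite /shift_rel.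
have := divn_eq (r + (k - 1)) k; have := ltn_pmod (r + (k-1)) k0. nia.
Qed.

Lemma shift_lt k r : (0 < k)%N -> (shift_rel k r < r + k)%N.
Proof.
move=> k0; rewrite /shift_rel.
have := divn_eq (r + (k - 1)) k; have := ltn_pmod (r + (k-1)) k0. nia.
Qed.

Lemma shift_le k r C : (0 < k)%N -> (r < C)%N ->
  (shift_rel k r <= ((C-1) %/ k + 1) * k)%N.
Proof.
move=> k0 rC; rewrite /shift_rel.
have := divn_eq (r + (k - 1)) k; have := ltn_pmod (r + (k-1)) k0.
have := divn_eq (C - 1) k; have := ltn_pmod (C - 1) k0.
set a := (r + (k - 1)) %/ k; set b := (C - 1) %/ k.
move=> h1 h2 h3 h4.
have : (a <= b + 1)%N by nia.
nia.
Qed.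

Local Open Scope ring_scope.

Theorem lemma2p2 (R : realFieldType) (P I : finType) (pg : I -> P) (rel : I -> nat)
  (L : nat) (eps : R) (k : nat) :
  opt_maxflow pg rel L ->
  0 < eps -> eps <= 1 ->
  eps * L%:R = k%:R -> (0 < k)%N ->
  (exists s' : schedJ' P, feasibleJ' k s' /\
     forall i : I, exists C',
       completesJ' s' (pg i) (shift_rel k (rel i)) C' /\
       (C' - shift_rel k (rel i))%:R <= (1 + 2 * eps) * L%:R) /\
  (forall s' : schedJ' P, feasibleJ' k s' ->
     exists s : schedJ P, feasibleJ s /\
       forall (i : I) (C' : nat),
         completesJ' s' (pg i) (shift_rel k (rel i)) C' ->
         exists C, completesJ s (pg i) (rel i) C /\
           (C - rel i)%:R - (C' - shift_rel k (rel i))%:R <= 2 * eps * L%:R).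
Proof.
move=> [[s [s0 sopt]] _] e0 e1 HL k0; split.
- pose g t (u : 'I_k) := s (t - 2 * k + u + 1)%N.
  pose s' : schedJ' P := fun t =>
    if (k %| t)%N then [set p | [exists u : 'I_k, g t u == Some p]] else set0.
  exists s'; split.
  + move=> t; rewrite /s'; case: ifP => kt; last by rewrite cards0 eqxx.
    split=> //.
    set A := [set p | _].
    have -> : #|A| = #|Some @: A| by rewrite card_imset //; move=> x y [].
    apply: (@leq_trans #|[set g t u | u : 'I_k]|); last first.
      by apply: (leq_trans (leq_imset_card _ _)); rewrite card_ord.
    apply/subset_leq_card/subsetP => o /imsetP[p]; rewrite inE.
    by move=> /existsP[u /eqP gu] ->; apply/imsetP; exists u.
  + move=> i.
    have [C [[rC sC _] CL]] := sopt i.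
    set r := rel i; set r' := shift_rel k r.
    set j := ((C - 1) %/ k)%N.
    set t1 := ((j + 2) * k)%N.
    have hC := divn_eq (C - 1)%N k; have hm := ltn_pmod (C - 1)%N k0.
    have hr1 := @shift_le k r C k0 rC.
    have hr2 := @shift_ge k r k0.
    have rt : (r' < t1)%N by rewrite /t1 /r' -/j; nia.
    have qt : pg i \in s' t1.
      rewrite /s' dvdn_mull // inE; apply/existsP.
      exists (Ordinal hm); rewrite /g /=.
      have -> : (t1 - 2 * k + (C - 1) %% k + 1 = C)%N by rewrite /t1 -/j; nia.
      by rewrite sC.
    have [C' [rC' qC' C't fst]] := @first_after (fun t => pg i \in s' t) _ _ rt qt.
    exists C'; split; first by split => // u h1 h2; apply: fst.
    have hn : (C' - r' <= L + 2 * k)%N by rewrite /t1 -/j in C't; nia.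
    have := hn; rewrite -(ler_nat R) natrD natrM => hn'.
    rewrite mulrDl mul1r -mulrA HL. lra.
- move=> s' fs'.
  pose sJ : schedJ P := fun t =>
    if t == 0%N then None else
    nth None (map Some (enum (s' (((t - 1) %/ k) * k)%N))) ((t - 1) %% k).
  exists sJ; split; first by [].
  move=> i C' [rC' pC' _].
  set r := rel i; set r' := shift_rel k r; set p := pg i.
  have hr1 := @shift_ge k r k0; have hr2 := @shift_lt k r k0.
  rewrite -/r' in hr1 hr2. rewrite -/r -/r' in rC'.
  have [cardk dv] := fs' C'.
  have kC' : (k %| C')%N by apply: dv; apply/set0Pn; exists p.
  set S := s' C'.
  set j := index p (enum S).
  have jS : (j < size (enum S))%N by rewrite index_mem mem_enum.
  have jk : (j < k)%N by move: jS; rewrite -cardE => h; apply: leq_trans h cardk.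
  set t := (C' + j + 1)%N.
  have rt : (r < t)%N by rewrite /t; lia.
  have qt : sJ t == Some p.
    rewrite /sJ /t addn1 /= subn1 /=.
    have -> : (C' + j = (C' %/ k) * k + j)%N by rewrite divnK.
    have e1' : ((C' %/ k * k + j) %/ k = C' %/ k)%N.
      by rewrite divnMDl // (divn_small jk) addn0.
    have e2' : ((C' %/ k * k + j) %% k = j)%N by rewrite modnMDl modn_small.
    rewrite e1' e2' divnK //.
    by rewrite (nth_map p) // nth_index // mem_enum.
  have [C [rC qC Ct fst]] := @first_after (fun t => sJ t == Some p) _ _ rt qt.
  exists C; split.
    split => //; first by apply/eqP.
    by move=> u h1 h2; apply/eqP; apply: fst.
  have hn : (C - r <= (C' - r') + 2 * k)%N by rewrite /t in Ct; lia.
  have := hn; rewrite -(ler_nat R) natrD natrM => hn'.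
  rewrite -mulrA HL. lra.
Qed.
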